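(* Every map in $\mathbb{J}$ is both an $\mathbb{I}$-cofibration and a weak equivalence (i.e. lies in $\mathbb{W}$).
   Context: $p\mathsf{Ch}^*_\mathbb{Q}=\mathsf{Fun}([0,\infty),\mathsf{Ch}^*_\mathbb{Q})$, non-negatively graded rational cochain complexes. $S^k=\mathbb{Q}$ in degree $k$; $D^k$ ($k\ge1$) is $\mathbb{Q}$ in degrees $k-1,k$ with identity differential; $D^0=0$. For $0\le s<t<\infty$, $\mathbb{S}^k_{[s,t)}$ is $0$ at $r<s$, $S^k$ at $s\le r<t$, $D^k$ at $r\ge t$; $\mathbb{S}^k_{[s,\infty)}$ is $0$ at $r<s$, $S^k$ at $r\ge s$; $\mathbb{D}^k_s$ is $0$ at $r<s$, $D^k$ at $r\ge s$. $\mathbb{I}=\{\mathbb{S}^k_{[s,t)}\to\mathbb{D}^k_s: k\in\mathbb{N},\ 0\le s<t\le\infty\}$, $\mathbb{J}=\{\mathbb{D}^k_t\to\mathbb{D}^k_s: 0\le s<t<\infty\}\cup\{0\to\mathbb{D}^k_s\}$. An $\mathbb{I}$-cofibration is a map having the left lifting property with respect to every map that has the right lifting property with respect to all maps in $\mathbb{I}$. $\mathbb{W}$ is the class of maps that are quasi-isomorphisms at each $r\in[0,\infty)$. *)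

(* Defs.v *)
From HB Require Import structures.
From mathcomp Require Import all_boot all_order all_algebra.
From mathcomp Require Import reals.
Set Implicit Arguments. Unset Strict Implicit. Unset Printing Implicit Defensive.
Import Order.TTheory GRing.Theory Num.Theory.
Local Open Scope ring_scope.

Section PCh.
Variable R : realType.

Definition Rnn := {r : R | 0 <= r}.

(* Raw data of a functor [0,oo) -> Ch^*_Q (non-negatively graded cochain
   complexes of Q-vector spaces): degree-wise Q-vector spaces, differentials
   d : X_r^n -> X_r^{n+1}, and structure maps X_r -> X_s (only meaningful
   for r <= s; the axioms in is_pcc only concern r <= s). *)
Record pcc := PCC {
  obj : Rnn -> nat -> lmodType rat;
  dif : forall r n, obj r n -> obj r n.+1;
  trm : forall r s n, obj r n -> obj s n }.
Arguments obj : clear implicits.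
Arguments dif : clear implicits.
Arguments trm : clear implicits.

Definition is_linear (V W : lmodType rat) (f : V -> W) : Prop :=
  forall (a : rat) (x y : V), f (a *: x + y) = a *: f x + f y.

Definition is_pcc (X : pcc) : Prop :=
  (forall r n, is_linear (dif X r n)) /\
  (forall r n x, dif X r n.+1 (dif X r n x) = 0) /\
  (forall (r s : Rnn) n, val r <= val s -> is_linear (trm X r s n)) /\
  (forall (r s : Rnn) n x, val r <= val s ->
      dif X s n (trm X r s n x) = trm X r s n.+1 (dif X r n x)) /\
  (forall r n x, trm X r r n x = x) /\
  (forall (r s u : Rnn) n x, val r <= val s -> val s <= val u ->
      trm X s u n (trm X r s n x) = trm X r u n x).

Definition hom (X Y : pcc) := forall r n, obj X r n -> obj Y r n.

Definition is_hom (X Y : pcc) (f : hom X Y) : Prop :=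
  (forall r n, is_linear (f r n)) /\
  (forall r n x, dif Y r n (f r n x) = f r n.+1 (dif X r n x)) /\
  (forall (r s : Rnn) n x, val r <= val s ->
      trm Y r s n (f r n x) = f s n (trm X r s n x)).

Definition hcomp (X Y Z : pcc) (g : hom Y Z) (f : hom X Y) : hom X Z :=
  fun r n x => g r n (f r n x).

Definition heq (X Y : pcc) (f g : hom X Y) : Prop :=
  forall r n x, f r n x = g r n x.

Definition LLP (A B : pcc) (i : hom A B) (X Y : pcc) (p : hom X Y) : Prop :=
  forall (u : hom A X) (v : hom B Y), is_hom u -> is_hom v ->
    heq (hcomp p u) (hcomp v i) ->
    exists h : hom B X, is_hom h /\ heq (hcomp h i) u /\ heq (hcomp p h) v.

Inductive stage := Zst | Sst | Dst.

(* dimension of the degree-n part of 0, S^k, D^k (D^0 = 0) *)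
Definition sdim (k : nat) (st : stage) (n : nat) : nat :=
  match st with
  | Zst => 0
  | Sst => (n == k)%N
  | Dst => ((0 < k) && ((n.+1 == k) || (n == k)))%N
  end.

(* all maps between one-dimensional pieces are the identity of Q; the
   differential of D^k is the identity Q (deg k-1) -> Q (deg k) *)
Definition mpcc (k : nat) (st : Rnn -> stage) : pcc :=
  {| obj := fun r n => ('rV[rat]_(sdim k (st r) n) : lmodType rat);
     dif := fun r n v =>
       v *m (if st r is Dst then const_mx 1 else 0 : 'M[rat]_(_, sdim k (st r) n.+1));
     trm := fun r s n v => v *m (const_mx 1 : 'M[rat]_(_, sdim k (st s) n)) |}.

Definition mhom (k : nat) (st1 st2 : Rnn -> stage) : hom (mpcc k st1) (mpcc k st2) :=
  fun r n v => v *m (const_mx 1 : 'M[rat]_(_, sdim k (st2 r) n)).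

Arguments mhom : clear implicits.
Arguments mpcc : clear implicits.

Definition st_Sint (s t : R) (r : Rnn) : stage :=
  if val r < s then Zst else if val r < t then Sst else Dst.
Definition st_Sinf (s : R) (r : Rnn) : stage :=
  if val r < s then Zst else Sst.
Definition st_D (s : R) (r : Rnn) : stage :=
  if val r < s then Zst else Dst.
Definition st_0 (r : Rnn) : stage := Zst.

Definition SSint k s t := mpcc k (st_Sint s t).
Definition SSinf k s := mpcc k (st_Sinf s).
Definition DD k s := mpcc k (st_D s).
Definition Zero k := mpcc k st_0.

Definition I_fin k s t : hom (SSint k s t) (DD k s) := mhom k _ _.
Definition I_inf k s : hom (SSinf k s) (DD k s) := mhom k _ _.
Definition J_D k s t : hom (DD k t) (DD k s) := mhom k _ _.
Definition J_0 k s : hom (Zero k) (DD k s) := mhom k _ _.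

Arguments SSint : clear implicits.
Arguments SSinf : clear implicits.
Arguments DD : clear implicits.
Arguments Zero : clear implicits.
Arguments I_fin : clear implicits.
Arguments I_inf : clear implicits.
Arguments J_D : clear implicits.
Arguments J_0 : clear implicits.

Definition RLP_I (X Y : pcc) (p : hom X Y) : Prop :=
  (forall (k : nat) (s t : R), 0 <= s -> s < t -> LLP (I_fin k s t) p) /\
  (forall (k : nat) (s : R), 0 <= s -> LLP (I_inf k s) p).

Definition I_cof (A B : pcc) (j : hom A B) : Prop :=
  forall (X Y : pcc) (p : hom X Y), is_pcc X -> is_pcc Y -> is_hom p ->
    RLP_I p -> LLP j p.

Definition cocycle (X : pcc) r n (x : obj X r n) : Prop := dif X r n x = 0.
Definition coboundary (X : pcc) r : forall n, obj X r n -> Prop :=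
  fun n => match n return obj X r n -> Prop with
           | 0%N => fun x => x = 0
           | m.+1 => fun x => exists y, dif X r m y = x
           end.

(* H^n(f_r) is injective and surjective, written out *)
Definition quasi_iso_at (X Y : pcc) (f : hom X Y) (r : Rnn) : Prop :=
  forall n,
    (forall x : obj X r n, cocycle x -> coboundary (f r n x) -> coboundary x) /\
    (forall y : obj Y r n, cocycle y ->
       exists x : obj X r n, cocycle x /\ coboundary (f r n x - y)).

Definition inW (X Y : pcc) (f : hom X Y) : Prop := forall r, quasi_iso_at f r.

End PCh.

(* Main.v *)
Require Import Defs.
From HB Require Import structures.
From mathcomp Require Import all_boot all_order all_algebra.
From mathcomp Require Import reals.
Import Order.TTheory GRing.Theory Num.Theory.
Local Open Scope ring_scope.
Set Implicit Arguments. Unset Strict Implicit.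

Definition coef d (w : 'rV[rat]_d) : rat := \sum_(i < d) w 0 i.

Lemma coef_const d (c : rat) : coef (const_mx c : 'rV_d) = c *+ d.
Proof. rewrite /coef; under eq_bigr do rewrite mxE. by rewrite sumr_const card_ord. Qed.

Lemma mul_const d e (w : 'rV[rat]_d) : w *m (const_mx 1 : 'M_(d,e)) = coef w *: const_mx 1.
Proof.
apply/matrixP => i j; rewrite !mxE (ord1 i) /coef mulr1; apply: eq_bigr => l _; by rewrite mxE mulr1.
Qed.

Lemma rv_le1 d (w : 'rV[rat]_d) : (d <= 1)%N -> w = coef w *: const_mx 1.
Proof.
case: d w => [|[|//]] w _; apply/matrixP => i j; first by case: j.
by rewrite (ord1 i) (ord1 j) !mxE /coef big_ord1 mulr1.
Qed.

Lemma coef_lin d a (x y : 'rV[rat]_d) : coef (a *: x + y) = a * coef x + coef y.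
Proof. rewrite /coef mulr_sumr -big_split; apply: eq_bigr => i _; by rewrite !mxE. Qed.

Lemma coefd d (w : 'rV[rat]_d) : (d <= 1)%N -> coef w *+ d = coef w.
Proof. case: d w => [|[|//]] w _; last by rewrite mulr1n. by rewrite mulr0n /coef big_ord0. Qed.

Lemma coef_mul0 d e (w : 'rV[rat]_d) : coef (w *m (0 : 'M_(d,e))) = 0.
Proof. by rewrite mulmx0 /coef big1 // => i _; rewrite mxE. Qed.

Lemma sdim_le1 k st n : (sdim k st n <= 1)%N.
Proof. by case: st => //=; rewrite leq_b1. Qed.

Lemma lin0 (V W : lmodType rat) (f : V -> W) : is_linear f -> f 0 = 0.
Proof. move=> fl; have h := fl 1 0 0; rewrite !scale1r !addr0 in h. apply: (addrI (f 0)); by rewrite addr0 -h. Qed.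

Lemma linZ (V W : lmodType rat) (f : V -> W) a x : is_linear f -> f (a *: x) = a *: f x.
Proof. move=> fl; by rewrite -[a *: x]addr0 fl lin0 // addr0. Qed.

Section S.
Variable R : realType.

Definition gen k (st : Rnn R -> stage) r n : obj (mpcc k st) r n := const_mx 1.
Definition isD (st : stage) : nat := if st is Dst then 1%N else 0%N.

Definition mk k st (X : pcc R) (E : forall r n, obj X r n) : Defs.hom (mpcc k st) X :=
  fun r n w => coef w *: E r n.

Lemma hom_lin k st (X : pcc R) (f : Defs.hom (mpcc k st) X) : is_hom f ->
  forall r n w, f r n w = coef w *: f r n (gen k st r n).
Proof. move=> [fl _] r n w. rewrite {1}(rv_le1 w) ?sdim_le1 //. exact: (linZ _ _ (fl r n)). Qed.
End S.
Arguments mk {R} k st {X} E.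
Arguments gen {R} k st r n.

Lemma coef_mulc d e (w : 'rV[rat]_d) : coef (w *m (const_mx 1 : 'M_(d,e))) = coef w *+ e.
Proof. rewrite mul_const {1}/coef; under eq_bigr do rewrite !mxE mulr1. by rewrite sumr_const card_ord. Qed.

Lemma coef_dif k st n (w : 'rV[rat]_(sdim k st n)) :
  coef (w *m (if st is Dst then const_mx 1 else 0 : 'M_(_, sdim k st n.+1)))
  = coef w *+ (isD st * sdim k st n.+1).
Proof. case: st w => /= w; rewrite ?coef_mul0 ?mul1n ?coef_mulc //. Qed.

Lemma scale_nat (V : lmodType rat) (c : rat) (v : V) d : c *: (v *+ d) = (c *+ d) *: v.
Proof. by rewrite -scalerMnr scalerMnl. Qed.

Lemma cancel_d (V : lmodType rat) (c : rat) (v : V) d m : c *+ d = c -> (c *+ (d * m)) *: v = (c *+ m) *: v.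
Proof. by move=> h; rewrite mulrnA h. Qed.

Section S2.
Variable R : realType.

Lemma mk_hom k st (X : pcc R) (E : forall r n, obj X r n) : is_pcc X ->
  (forall r n, dif (E r n) *+ sdim k (st r) n
      = E r n.+1 *+ (sdim k (st r) n * isD (st r) * sdim k (st r) n.+1)) ->
  (forall (r r' : Rnn R) n, val r <= val r' -> trm r' (E r n) *+ sdim k (st r) n
      = E r' n *+ (sdim k (st r) n * sdim k (st r') n)) ->
  is_hom (mk k st E).
Proof.
move=> [dl [_ [tl _]]] HB HC; split; [|split].
- move=> r n a x y; by rewrite /mk coef_lin scalerDl scalerA.
- move=> r n w; rewrite /mk /= (linZ _ _ (dl r n)) coef_dif.
  rewrite -scale_nat -{1}(coefd w) ?sdim_le1 // -scale_nat HB !scale_nat -mulnA cancel_d //.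
  by rewrite coefd ?sdim_le1.
- move=> r r' n w rr; rewrite /mk /= (linZ _ _ (tl r r' n rr)) coef_mulc.
  rewrite -scale_nat -{1}(coefd w) ?sdim_le1 // -scale_nat HC // !scale_nat cancel_d //.
  by rewrite coefd ?sdim_le1.
Qed.

Lemma hom_facts k st (X : pcc R) (f : Defs.hom (mpcc k st) X) : is_hom f ->
  (forall r n, sdim k (st r) n = 0%N -> f r n (gen k st r n) = 0) /\
  (forall r n, dif (f r n (gen k st r n)) = f r n.+1 (gen k st r n.+1) *+ (sdim k (st r) n * isD (st r) * sdim k (st r) n.+1)) /\
  (forall (r r' : Rnn R) n, val r <= val r' -> trm r' (f r n (gen k st r n)) = f r' n (gen k st r' n) *+ (sdim k (st r) n * sdim k (st r') n)).
Proof.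
move=> fh; pose F := fun r n => f r n (gen k st r n); have fl := hom_lin fh; case: fh => [_ [fd ft]]; split; [|split].
- move=> r n d0; rewrite /F fl /gen coef_const. have -> : (1:rat) *+ sdim k (st r) n = 0 by rewrite d0. by rewrite scale0r.
- move=> r n; rewrite /F fd fl coef_dif /gen coef_const -mulrnA scaler_nat mulnA.
  done.
- move=> r r' n rr; rewrite /F ft // fl coef_mulc /gen coef_const -mulrnA scaler_nat.
  done.
Qed.
End S2.

Lemma muln_d (V : zmodType) (v : V) (d : nat) : (d <= 1)%N -> (d = 0%N -> v = 0) -> v *+ d = v.
Proof. case: d => [|[|]] //= _ h; by rewrite h. Qed.

Section S3.
Variable R : realType.

Lemma coef_gen k (st : Rnn R -> stage) r n : coef (gen k st r n) = 1 *+ sdim k (st r) n.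
Proof. exact: coef_const. Qed.

Lemma gen_d k st (X : pcc R) (f : Defs.hom (mpcc k st) X) : is_hom f ->
  forall r n, f r n (gen k st r n) *+ sdim k (st r) n = f r n (gen k st r n).
Proof. move=> fh r n; apply: muln_d; [exact: sdim_le1| exact: (proj1 (hom_facts fh))]. Qed.

Lemma mhom_app k st1 st2 (X : pcc R) (g : Defs.hom (mpcc k st2) X) : is_hom g ->
  forall r n (w : obj (mpcc k st1) r n),
  g r n (@mhom R k st1 st2 r n w) = coef w *: g r n (gen k st2 r n).
Proof. move=> [gl _] r n w; rewrite /mhom mul_const; exact: (linZ _ _ (gl r n)). Qed.

Lemma heq_comm k st1 st2 (X Y : pcc R) (p : Defs.hom X Y) (E : forall r n, obj X r n)
  (g : Defs.hom (mpcc k st2) Y) : is_hom p -> is_hom g ->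
  (forall r n, p r n (E r n) *+ sdim k (st1 r) n
     = g r n (gen k st2 r n) *+ (sdim k (st1 r) n * sdim k (st2 r) n)) ->
  heq (hcomp p (mk k st1 E)) (hcomp g (@mhom R k st1 st2)).
Proof.
move=> [pl _] gh H r n w; rewrite /hcomp /mk (linZ _ _ (pl r n)) (mhom_app (st1:=st1) gh).
rewrite -{1}(coefd w) ?sdim_le1 // -scale_nat H scale_nat cancel_d ?coefd ?sdim_le1 //.
by rewrite -scale_nat gen_d.
Qed.

Lemma heq_ext k st1 st2 (X : pcc R) (h : Defs.hom (mpcc k st2) X) (u : Defs.hom (mpcc k st1) X) :
  is_hom h -> is_hom u ->
  heq (hcomp h (@mhom R k st1 st2)) u <->
  (forall r n, h r n (gen k st2 r n) *+ sdim k (st1 r) n = u r n (gen k st1 r n) *+ sdim k (st1 r) n).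
Proof.
move=> hh uh; split.
- move=> H r n; have := H r n (gen k st1 r n); rewrite /hcomp (mhom_app (st1:=st1) hh).
  rewrite coef_gen -scale_nat scale1r => ->. by rewrite (gen_d uh).
- move=> H r n w; rewrite /hcomp (mhom_app (st1:=st1) hh) (hom_lin uh).
  by rewrite -{1}(coefd w) ?sdim_le1 // -scale_nat H scale_nat coefd ?sdim_le1.
Qed.

Lemma mk_gen k st (X : pcc R) (E : forall r n, obj X r n) r n :
  mk k st E r n (gen k st r n) = E r n *+ sdim k (st r) n.
Proof. by rewrite /mk /gen coef_const -scale_nat scale1r. Qed.

Lemma heq_p (X Y : pcc R) k st (h : Defs.hom (mpcc k st) X) (p : Defs.hom X Y) g :
  heq (hcomp p h) g -> forall r n, p r n (h r n (gen k st r n)) = g r n (gen k st r n).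
Proof. by move=> H r n; apply: H. Qed.

End S3.

Lemma eqF1 n : (n == n.+1) = false. Proof. by elim: n. Qed.
Lemma eqF2 n : (n == n.+2) = false. Proof. by elim: n. Qed.
Lemma eqF3 n : (n.+1 == n) = false. Proof. by elim: n. Qed.
Lemma eqF4 n : (n.+2 == n) = false. Proof. by elim: n. Qed.

Lemma ltF (R : realType) (a b x : R) : a <= b -> b <= x -> (x < a) = false.
Proof. move=> h1 h2; apply/negbTE; rewrite -leNgt; exact: le_trans h1 h2. Qed.
Lemma ltT (R : realType) (x y a : R) : x <= y -> y < a -> (x < a) = true.
Proof. move=> h1 h2; exact: le_lt_trans h1 h2. Qed.

Ltac cut1 r s t st :=
  let h := fresh "h" in case: (ltP (sval r) t) => h;
  [ let h' := fresh "h" in case: (ltP (sval r) s) => h'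
  | let h' := fresh "h" in have h' : (s <= sval r) := le_trans (ltW st) h ].
Ltac cut2 r r' rr s t st :=
  let h := fresh "h" in case: (ltP (sval r') t) => h;
  [ let h1 := fresh "h" in have h1 : sval r < t := le_lt_trans rr h;
    let h' := fresh "h" in case: (ltP (sval r') s) => h';
     [ let h2 := fresh "h" in have h2 : sval r < s := le_lt_trans rr h'
     | let h2 := fresh "h" in case: (ltP (sval r) s) => h2 ]
  | let h' := fresh "h" in have h' : (s <= sval r') := le_trans (ltW st) h;
    cut1 r s t st ].
Ltac cs1 r s := let h := fresh "h" in case: (ltP (sval r) s) => h.
Ltac cs2 r r' rr s :=
  let h := fresh "h" in case: (ltP (sval r') s) => h;
  [ let h1 := fresh "h" in have h1 : sval r < s := le_lt_trans rr h
  | cs1 r s ].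
Ltac subst_lt := repeat match goal with
 | H : is_true (?x < ?y) |- context [?x < ?y] => rewrite H
 | H : is_true (?y <= ?x) |- context [?x < ?y] => rewrite (ltF (lexx _) H)
 end.
Ltac killneq := repeat match goal with H : is_true (_ != _) |- _ => rewrite ?(negbTE H); clear H end.
Ltac nsimp := rewrite /= ?eqSS ?eqxx ?eqF1 ?eqF2 ?eqF3 ?eqF4 /= ?mulr0n ?mulr1n ?mul0n ?muln0 ?mul1n ?muln1 ?mulr0n ?mulr1n.
Ltac zer A := try (symmetry; apply: A; rewrite /st_D /st_Sint /st_Sinf; subst_lt; nsimp; done);
  try (apply: A; rewrite /st_D /st_Sint /st_Sinf; subst_lt; nsimp; done).
Ltac ncase0 n k := case: (eqVneq n k) => [->|?]; [| case: (eqVneq n k.+1) => [->|?]; [| case: (eqVneq n k.+2) => [->|?]]].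
Ltac fin n k A := rewrite /st_D /st_Sint /st_Sinf; subst_lt; ncase0 n k; nsimp; killneq; nsimp => //; zer A.
Ltac ncase n k := case: (eqVneq n k) => [->|?]; [| case: (eqVneq n k.+1) => [->|?]; [| case: (eqVneq n k.+2) => [->|?]]].

Section M.
Variable R : realType.
Lemma dif0 (X : pcc R) r n : is_pcc X -> dif (0 : obj X r n) = 0.
Proof. move=> [h _]; exact: lin0 (h r n). Qed.
Lemma hp0 (X Y : pcc R) (p : Defs.hom X Y) r n : is_hom p -> p r n 0 = 0.
Proof. move=> [h _]; exact: lin0 (h r n). Qed.
Lemma trm0 (X : pcc R) (r r' : Rnn R) n : is_pcc X -> val r <= val r' -> trm r' (0 : obj X r n) = 0.
Proof. move=> [_ [_ [h _]]] rr; exact: lin0 (h r r' n rr). Qed.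
End M.
Section M2.
Variable R : realType.

Lemma JD_lift k (s t : R) (X Y : pcc R) (p : Defs.hom X Y) : 0 <= s -> s < t -> is_pcc X -> is_pcc Y ->
  is_hom p -> RLP_I p -> LLP (@J_D R k.+1 s t) p.
Proof.
move=> s0 st pX pY ph [Ifin _] u v uh vh huv.
have [UA [UB UC]] := hom_facts uh.
have [VA [VB VC]] := hom_facts vh.
have pUV : forall r n, p r n (u r n (gen k.+1 (st_D t) r n)) = v r n (gen k.+1 (st_D s) r n) *+ sdim k.+1 (st_D t r) n.
  move=> r n; have := huv r n (gen k.+1 (st_D t) r n).
  by rewrite /hcomp /J_D (mhom_app (st1:=st_D t) vh) coef_gen -scale_nat scale1r.
pose E1 r n : obj X r n := if sval r < t then 0 else u r n (gen k.+1 (st_D t) r n).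
have E1h : is_hom (mk k.+2 (st_Sint s t) E1).
  apply: mk_hom => //.
  + move=> r n; rewrite /E1 /st_Sint /st_D; cut1 r s t st; subst_lt; rewrite /= ?dif0 ?mul0rn // ?UB;
    fin n k UA.
  + move=> r r' n rr; rewrite /E1 /st_Sint /st_D; cut2 r r' rr s t st; subst_lt;
    rewrite /= ?trm0 ?mul0rn // ?UC //; fin n k UA.
pose V1 r n : obj Y r n := v r n (gen k.+1 (st_D s) r n).
have V1h : is_hom (mk k.+2 (st_D s) V1).
  apply: mk_hom => //.
  + move=> r n; rewrite /V1 VB /st_D; cut1 r s t st; fin n k VA.
  + move=> r r' n rr; rewrite /V1 VC // /st_D; cut2 r r' rr s t st; fin n k VA.
have c1 : heq (hcomp p (mk k.+2 (st_Sint s t) E1)) (hcomp (mk k.+2 (st_D s) V1) (@I_fin R k.+2 s t)).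
  apply: heq_comm => // r n; rewrite mk_gen /E1 /V1 /st_Sint /st_D; cut1 r s t st; subst_lt;
    rewrite /= ?hp0 ?mul0rn // ?pUV; fin n k VA.
have [h1 [h1h [h1a h1b]]] := Ifin k.+2 s t s0 st _ _ E1h V1h c1.
have [HA [HB HC]] := hom_facts h1h.
have H1E := (heq_ext h1h E1h).1 h1a.
have pH1 := heq_p h1b.
pose E2 r n : obj X r n := if sval r < t then h1 r n (gen k.+2 (st_D s) r n) else u r n (gen k.+1 (st_D t) r n).
have E2h : is_hom (mk k.+1 (st_Sint s t) E2).
  apply: mk_hom => //.
  + move=> r n; move: (H1E r n) (H1E r n.+1); rewrite !mk_gen /E2 /E1 /st_Sint /st_D; cut1 r s t st; subst_lt;
    rewrite /= ?HB ?UB; fin n k UA.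
  + move=> r r' n rr; move: (H1E r' n); rewrite !mk_gen /E2 /E1 /st_Sint /st_D; cut2 r r' rr s t st; subst_lt;
    rewrite /= ?HC ?UC //; fin n k UA.
have c2 : heq (hcomp p (mk k.+1 (st_Sint s t) E2)) (hcomp v (@I_fin R k.+1 s t)).
  apply: heq_comm => // r n; rewrite /E2 /st_Sint /st_D; cut1 r s t st; subst_lt;
    rewrite /= ?pH1 ?mk_gen ?pUV /V1; fin n k VA.
have [h2 [h2h [h2a h2b]]] := Ifin k.+1 s t s0 st _ _ E2h vh c2.
have H2E := (heq_ext h2h E2h).1 h2a.
exists h2; split => //; split => //.
apply/(heq_ext h2h uh) => r n; move: (H2E r n); rewrite !mk_gen /E2 /st_Sint /st_D; cut1 r s t st; subst_lt;
  rewrite /=; fin n k UA.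
Qed.

Lemma mulrn_d0 (V : zmodType) (v : V) d : d = 0%N -> v *+ d = 0.
Proof. by move->. Qed.

Lemma coef0d d (w : 'rV[rat]_d) : d = 0%N -> coef w = 0.
Proof. move=> e; move: w; rewrite e => w; by rewrite /coef big_ord0. Qed.

Lemma sdim0 (x : stage) n : x <> Sst -> sdim 0 x n = 0%N.
Proof. by case: x. Qed.
Lemma stD_nS (s : R) r : st_D s r <> Sst.
Proof. by rewrite /st_D; case: ifP. Qed.

Lemma lift_k0 st1 (s : R) (X Y : pcc R) (p : Defs.hom X Y) : (forall r, st1 r <> Sst) -> is_pcc X -> is_hom p ->
  LLP (@mhom R 0 st1 (st_D s)) p.
Proof.
move=> hst pX ph u v uh vh _.
have hh : is_hom (mk 0 (st_D s) (fun r n => (0 : obj X r n))).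
  apply: mk_hom => //; [move=> r n; by rewrite dif0 // !mul0rn | move=> r r' n rr; by rewrite trm0 // !mul0rn].
exists (mk 0 (st_D s) (fun r n => 0)); split => //; split.
- apply/(heq_ext hh uh) => r n; by rewrite !(mulrn_d0 _ (sdim0 _ (hst r))).
- move=> r n w; rewrite /hcomp /mk scaler0 hp0 // (hom_lin vh) (coef0d _ (sdim0 _ (@stD_nS s r))) scale0r. done.
Qed.

Lemma J0_lift k (s : R) (X Y : pcc R) (p : Defs.hom X Y) : 0 <= s -> is_pcc X -> is_pcc Y ->
  is_hom p -> RLP_I p -> LLP (@J_0 R k.+1 s) p.
Proof.
move=> s0 pX pY ph [_ Iinf] u v uh vh huv.
have [VA [VB VC]] := hom_facts vh.
pose V1 r n : obj Y r n := v r n (gen k.+1 (st_D s) r n).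
have V1h : is_hom (mk k.+2 (st_D s) V1).
  apply: mk_hom => //.
  + move=> r n; rewrite /V1 VB /st_D; cs1 r s; fin n k VA.
  + move=> r r' n rr; rewrite /V1 VC // /st_D; cs2 r r' rr s; fin n k VA.
pose E1 r n : obj X r n := 0.
have E1h : is_hom (mk k.+2 (st_Sinf s) E1).
  apply: mk_hom => //; [move=> r n; by rewrite /E1 dif0 // !mul0rn | move=> r r' n rr; by rewrite /E1 trm0 // !mul0rn].
have c1 : heq (hcomp p (mk k.+2 (st_Sinf s) E1)) (hcomp (mk k.+2 (st_D s) V1) (@I_inf R k.+2 s)).
  apply: heq_comm => // r n; rewrite mk_gen /E1 /V1 hp0 // mul0rn /st_Sinf /st_D; cs1 r s; subst_lt;
    rewrite /=; fin n k VA.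
have [h1 [h1h [h1a h1b]]] := Iinf k.+2 s s0 _ _ E1h V1h c1.
have [HA [HB HC]] := hom_facts h1h.
have H1E := (heq_ext h1h E1h).1 h1a.
have pH1 := heq_p h1b.
pose E2 r n : obj X r n := h1 r n (gen k.+2 (st_D s) r n).
have E2h : is_hom (mk k.+1 (st_Sinf s) E2).
  apply: mk_hom => //.
  + move=> r n; move: (H1E r n) (H1E r n.+1); rewrite !mk_gen /E2 /E1 /st_Sinf /st_D; cs1 r s; subst_lt;
    rewrite /= ?HB; fin n k VA.
  + move=> r r' n rr; rewrite /E2 /st_Sinf /st_D; cs2 r r' rr s; subst_lt;
    rewrite /= ?HC //; fin n k VA.
have c2 : heq (hcomp p (mk k.+1 (st_Sinf s) E2)) (hcomp v (@I_inf R k.+1 s)).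
  apply: heq_comm => // r n; rewrite /E2 /st_Sinf /st_D; cs1 r s; subst_lt;
    rewrite /= ?pH1 ?mk_gen /V1; fin n k VA.
have [h2 [h2h [h2a h2b]]] := Iinf k.+1 s s0 _ _ E2h vh c2.
exists h2; split => //; split => //.
apply/(heq_ext h2h uh) => r n; by rewrite /st_0 /= !mulr0n.
Qed.

Lemma rv0 d (w : 'rV[rat]_d) : d = 0%N -> w = 0.
Proof. move=> e; move: w; rewrite e => w; apply/matrixP => i j; by case: j. Qed.

Definition cob k (c : stage) n : 'rV[rat]_(sdim k c n) -> Prop :=
  match n return 'rV[rat]_(sdim k c n) -> Prop with
  | 0%N => fun x => x = 0
  | m.+1 => fun x => exists y : 'rV[rat]_(sdim k c m),
      y *m (if c is Dst then const_mx 1 else 0 : 'M_(_, sdim k c m.+1)) = x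
  end.
Arguments cob : clear implicits.

Lemma mulrn1 (V : zmodType) (v : V) d : d = 1%N -> v *+ d = v.
Proof. by move->. Qed.

Lemma cob_0 k c n : cob k c n 0.
Proof. case: n => [|m] //=; exists 0; by rewrite mul0mx. Qed.

Lemma acyc0 k (c : stage) n (x : 'rV[rat]_(sdim k c n)) : c <> Sst ->
  x *m (if c is Dst then const_mx 1 else 0 : 'M_(_, sdim k c n.+1)) = 0 -> cob k c n x.
Proof.
case: c x => // x _.
- move=> _; rewrite (rv0 x) //; exact: cob_0.
- move=> hx.
  case: k x hx => [|k] x hx; first by rewrite (rv0 x) //; exact: cob_0.
  case: (eqVneq n k) => [e|ne].
  + subst n; have c0 : coef x = 0.
      have := congr1 (@coef _) hx; rewrite coef_mulc (mulrn1 _ (_ : sdim k.+1 Dst k.+1 = 1%N)) => [->|]; last by rewrite /= eqxx orbT.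
      by rewrite /coef big1 // => i _; rewrite mxE.
    by rewrite (rv_le1 x) ?sdim_le1 // c0 scale0r; exact: cob_0.
  + case: (eqVneq n k.+1) => [e|ne']; last first.
      rewrite (rv0 x); first exact: cob_0. by rewrite /= ?eqSS (negbTE ne) (negbTE ne').
    subst n; exists (const_mx (coef x)).
    rewrite mul_const coef_const (mulrn1 _ (_ : sdim k.+1 Dst k = 1%N)); last by rewrite /= eqxx.
    by rewrite -rv_le1 ?sdim_le1.
Qed.

Lemma acyc k (st : Rnn R -> stage) r n (x : obj (mpcc k st) r n) : st r <> Sst -> cocycle x -> coboundary x.
Proof. move=> h; exact: (acyc0 (c:=st r) h). Qed.

Lemma qiso k (st1 st2 : Rnn R -> stage) r : st1 r <> Sst -> st2 r <> Sst -> quasi_iso_at (@mhom R k st1 st2) r.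
Proof.
move=> h1 h2 n; split.
- move=> x cx _; exact: acyc.
- move=> y cy; exists 0; split.
  + by rewrite /cocycle /= mul0mx.
  + rewrite /mhom mul0mx sub0r; move: (acyc h2 cy); case: n y cy => [|m] y cy /=.
    * by move->; rewrite oppr0.
    * by case=> z hz; exists (- z); rewrite mulNmx hz.
Qed.
End M2.


Lemma st0_nS (R : realType) (r : Rnn R) : st_0 r <> Sst.
Proof. by []. Qed.

Theorem mainTheorem10 (R : realType) :
  (forall (k : nat) (s t : R), 0 <= s -> s < t ->
      I_cof (@J_D R k s t) /\ inW (@J_D R k s t)) /\
  (forall (k : nat) (s : R), 0 <= s ->
      I_cof (@J_0 R k s) /\ inW (@J_0 R k s)).
Proof.
split.
- move=> k s t s0 st; split.
  + move=> X Y p pX pY ph hp; case: k => [|k].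
    * exact: (@lift_k0 R (st_D t) s X Y p (@stD_nS R t) pX ph).
    * exact: JD_lift.
  + move=> r; exact: (qiso _ (@stD_nS R t r) (@stD_nS R s r)).
- move=> k s s0; split.
  + move=> X Y p pX pY ph hp; case: k => [|k].
    * exact (@lift_k0 R (@st_0 R) s X Y p (fun r => @st0_nS R r) pX ph).
    * exact: J0_lift.
  + move=> r; exact: (qiso _ (@st0_nS R r) (@stD_nS R s r)).
Qed.
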